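(* Let $D$ be an integral domain with quotient field $K$ such that the intersection of all maximal ideals of $D$ of finite index is $(0)$, and let $n\ge 1$. Let $f(x)=g(x)/d$ with $g\in D[x]$ and $d\in D\setminus\{0\}$. Then $f\in \mathrm{Int}_K(M_n(D))$ if and only if, for every monic polynomial $h\in D[x]$ of degree $n$ that is irreducible in $D[x]$, there exist $q,r\in D[x]$ with $g = qh + d\,r$ (i.e. $g$ is divisible by $h$ modulo $dD[x]$).
   Context: $M_n(D)$ denotes the ring of $n\times n$ matrices over $D$. $\mathrm{Int}_K(M_n(D))=\{f\in K[x]\mid f(C)\in M_n(D)\text{ for all } C\in M_n(D)\}$, where $f(C)$ is computed in $M_n(K)$ with scalars acting as scalar matrices. *)

(* Defs.v *)
From HB Require Import structures.
From mathcomp Require Import all_boot all_order all_algebra.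
Set Implicit Arguments. Unset Strict Implicit. Unset Printing Implicit Defensive.
Import Order.TTheory GRing.Theory Num.Theory.
Local Open Scope ring_scope.

Definition toK (D : idomainType) : D -> {fraction D} := @FracField.tofrac D.

Definition is_ideal (D : idomainType) (I : D -> Prop) : Prop :=
  [/\ I 0, (forall a b, I a -> I b -> I (a + b)) & (forall r a, I a -> I (r * a))].

Definition is_maximal_ideal (D : idomainType) (I : D -> Prop) : Prop :=
  [/\ is_ideal I, ~ I 1 &
      forall J : D -> Prop, is_ideal J -> (forall x, I x -> J x) ->
        (forall x, J x -> I x) \/ J 1].

(* I has finite index in D: D/I is finite, i.e. finitely many residues
   represent every class modulo I. *)
Definition finite_index (D : idomainType) (I : D -> Prop) : Prop :=
  exists s : seq D, forall x : D, exists2 y, y \in s & I (x - y).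

Definition fin_max_ideals_meet_zero (D : idomainType) : Prop :=
  forall x : D,
    (forall I : D -> Prop, is_maximal_ideal I -> finite_index I -> I x) -> x = 0.

(* f in Int_K(M_n(D)) with n = m.+1: f(C), computed in M_n(K), lies in M_n(D)
   for every C in M_n(D). *)
Definition IntK_Mn (D : idomainType) (m : nat) (f : {poly {fraction D}}) : Prop :=
  forall C : 'M[D]_m.+1,
    exists B : 'M[D]_m.+1, horner_mx (map_mx (@toK D) C) f = map_mx (@toK D) B.

Definition irreducible_in (D : idomainType) (p : {poly D}) : Prop :=
  [/\ p != 0, p \isn't a GRing.unit &
      forall a b : {poly D}, p = a * b -> a \is a GRing.unit \/ b \is a GRing.unit].

(* Main.v *)
Require Import Defs.
From HB Require Import structures.
From mathcomp Require Import all_boot all_order all_algebra all_field all_fingroup.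
From mathcomp Require Import ring zify.
From Stdlib Require Import ClassicalEpsilon Classical.
Set Implicit Arguments. Unset Strict Implicit. Unset Printing Implicit Defensive.
Import Order.TTheory GRing.Theory Num.Theory.
Local Open Scope ring_scope.

Lemma exists_irr (F : finFieldType) (n : nat) : (0 < n)%N ->
  exists p : {poly F}, [/\ p \is monic, size p = n.+1 & irreducible_poly p].
Proof.
move=> n_gt0.
pose Q := #|F|; pose m := (Q ^ n)%N.
have Q_gt1 : (1 < Q)%N by apply: finNzRing_gt1.
have m_gt1 : (1 < m)%N by rewrite -(exp1n n) ltn_exp2r.
pose qp : {poly F} := 'X^m - 'X.
have qp0 : qp != 0.
  by rewrite -size_poly_eq0 /qp size_polyDl ?size_polyXn // size_polyN size_polyX ltnS.
have /FinSplittingFieldFor[/= L splitLq] := qp0.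
rewrite rmorphB rmorphXn /= map_polyX in splitLq.
have /finField_galois_generator[/= a _ Da]: (1 <= {:L})%VS by apply: sub1v.
rewrite dimv1 expn1 in Da.
have{splitLq} [zs DqL defL] := splitLq.
have [p pr_p pcharFp] := finPcharP F.
have cF : Q = (p ^ logn p Q)%N := card_pprimeChar pcharFp.
have pQ : (p %| Q)%N.
  move: cF Q_gt1; case: (logn p Q) => [|k] -> //; by rewrite expnS dvdn_mulr.
have pcharL : p \in [pchar L] by rewrite pchar_lalg.
have mL : (m%:R : L) = 0.
  apply/eqP; rewrite -(dvdn_pcharf pcharL); exact: dvdn_exp.
have Uzs : uniq zs.
  rewrite -separable_prod_XsubC -(eqp_separable DqL) unlock.
  rewrite derivB derivXn derivX -mulr_natr -polyC_natr mL mulr0 sub0r.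
  have -> : (-1 : {poly L}) = (-1) *: 1 by rewrite scaleN1r.
  by rewrite coprimepZr ?coprimep1 // oppr_eq0 oner_eq0.
pose E := fixedField [set (a ^+ n)%g].
have in_zs : zs =i E.
  move=> z; rewrite -root_prod_XsubC -(eqp_root DqL).
  apply/idP/fixedFieldP; rewrite ?memvf //.
    rewrite /root !hornerE subr_eq0 => /eqP zE x /set1P ->.
    rewrite -[RHS]zE /m; elim: (n) => [|i IHi]; first by rewrite gal_id.
    by rewrite expgSr expnSr exprM -IHi galM ?Da ?memvf.
  move=> H; have := H _ (set11 _); rewrite /root !hornerE subr_eq0 => zE.
  rewrite -[X in _ == X]zE /m; apply/eqP.
  elim: (n) => [|i IHi]; first by rewrite gal_id.
  by rewrite expgSr expnSr exprM IHi galM ?Da ?memvf.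
pose Fm := FinFieldExtType L.
have cardE := @card_vspace F Fm _ E.
have szs : size zs = m.
  apply: succn_inj; rewrite -(size_prod_XsubC _ id) -(eqp_size DqL).
  by rewrite size_polyDl ?size_polyXn // size_polyN size_polyX ltnS.
have cardE2 : (Q ^ \dim E)%N = m.
  rewrite -cardE -szs -(@card_uniqP Fm zs Uzs); apply: eq_card => z /=.
  by rewrite in_zs.
have dimE : \dim E = n.
  by apply/eqP; rewrite -(eqn_exp2l _ _ Q_gt1) cardE2.
have /and3P[_ sepE _] := finField_galois (sub1v E).
pose z := separable_generator 1 E.
have defE : E = <<1; z>>%VS := eq_adjoin_separable_generator sepE (sub1v E).
have szmin : size (minPoly 1 z) = n.+1.
  by rewrite size_minPoly adjoin_degreeE -defE dimv1 divn1 dimE.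
have /polyOver1P[p0 Dp0] := minPolyOver 1 z.
exists p0; split.
- by rewrite -(map_monic (in_alg L)) -Dp0 monic_minPoly.
- by rewrite -szmin Dp0 size_map_poly.
split; first by rewrite -(size_map_poly (in_alg L)) -Dp0 szmin ltnS.
move=> q szq dvq.
have := minPoly_irr (alg_polyOver 1 q) (_ : map_poly (in_alg L) q %| minPoly 1 z).
rewrite Dp0 dvdp_map => /(_ dvq) /orP[|].
  by rewrite eqp_map.
by rewrite -(rmorph1 (map_poly (in_alg L))) eqp_map => /eqp_size; rewrite size_poly1 => e; rewrite e eqxx in szq.
Qed.

Section Quot.
Variables (D : idomainType) (M : D -> Prop) (s : seq D).
Hypothesis Mmax : is_maximal_ideal M.
Hypothesis Ms : forall x : D, exists2 y, y \in s & M (x - y).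

Definition inM (x : D) : bool := if excluded_middle_informative (M x) then true else false.
Lemma inMP x : reflect (M x) (inM x).
Proof. by rewrite /inM; case: excluded_middle_informative => H; constructor. Qed.

Let Mid : is_ideal M. Proof. by case: Mmax. Qed.
Lemma M0 : M 0. Proof. by case: Mid. Qed.
Lemma MD a b : M a -> M b -> M (a + b). Proof. by case: Mid => _ H _; apply: H. Qed.
Lemma MMl r a : M a -> M (r * a). Proof. by case: Mid => _ _ H; apply: H. Qed.
Lemma MMr r a : M a -> M (a * r). Proof. by rewrite mulrC; apply: MMl. Qed.
Lemma MN a : M a -> M (- a). Proof. by move=> Ma; rewrite -mulN1r; apply: MMl. Qed.
Lemma MB a b : M a -> M b -> M (a - b). Proof. by move=> Ma Mb; apply: MD => //; apply: MN. Qed.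
Lemma Mtr x y z : M (x - y) -> M (y - z) -> M (x - z).
Proof. by move=> H1 H2; have := MD H1 H2; rewrite addrA subrK. Qed.
Lemma Msym x y : M (x - y) -> M (y - x).
Proof. by move/MN; rewrite opprB. Qed.
Lemma Meq x y : x = y -> M (x - y). Proof. by move=> ->; rewrite subrr; apply: M0. Qed.

Definition cls (x : D) : nat := find (fun y => inM (x - y)) s.
Lemma cls_lt x : (cls x < size s)%N.
Proof. rewrite /cls -has_find; have [y ys Mxy] := Ms x; apply/hasP; exists y => //; exact/inMP. Qed.
Lemma M_cls x : M (x - nth 0 s (cls x)).
Proof. apply/inMP; apply: (@nth_find _ 0 (fun y => inM (x - y))); rewrite has_find; exact: cls_lt. Qed.
Lemma cls_eq x y : M (x - y) -> cls x = cls y.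
Proof.
move=> Mxy; apply: eq_find => z; apply/inMP/inMP => H.
  exact: Mtr (Msym Mxy) H.
exact: Mtr Mxy H.
Qed.
Lemma cls_eqP x y : cls x = cls y -> M (x - y).
Proof. move=> e; have := M_cls y; rewrite -e => H; exact: Mtr (M_cls x) (Msym H). Qed.

Definition QT := {i : 'I_(size s) | cls (nth 0 s i) == i}.
HB.instance Definition _ := Finite.on QT.

Definition rep (a : QT) : D := nth 0 s (val (val a)).
Lemma mk_subproof x : cls (nth 0 s (Ordinal (cls_lt x))) == Ordinal (cls_lt x).
Proof. by apply/eqP => /=; apply: cls_eq; apply: Msym; apply: M_cls. Qed.
Definition mk (x : D) : QT := exist _ (Ordinal (cls_lt x)) (mk_subproof x).
Lemma repK a : mk (rep a) = a.
Proof. case: a => i Hi; apply: val_inj; apply: val_inj => /=; rewrite /rep /=; exact/eqP. Qed.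
Lemma mkK x : M (x - rep (mk x)). Proof. exact: M_cls. Qed.
Lemma mk_eq x y : M (x - y) -> mk x = mk y.
Proof. by move=> H; apply: val_inj; apply: val_inj => /=; apply: cls_eq. Qed.
Lemma mk_eqP x y : mk x = mk y -> M (x - y).
Proof. move=> e; apply: cls_eqP; exact: (congr1 (fun a => nat_of_ord (val a)) e). Qed.
Lemma mkrep x : M (rep (mk x) - x). Proof. exact: Msym (mkK x). Qed.

Definition qadd a b := mk (rep a + rep b).
Definition qopp a := mk (- rep a).
Definition qmul a b := mk (rep a * rep b).
Lemma qaddE x y : qadd (mk x) (mk y) = mk (x + y).
Proof. apply: mk_eq; have := MD (mkrep x) (mkrep y); congr M; ring. Qed.
Lemma qoppE x : qopp (mk x) = mk (- x).
Proof. apply: mk_eq; have := MN (mkrep x); congr M; ring. Qed.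
Lemma qmulE x y : qmul (mk x) (mk y) = mk (x * y).
Proof.
apply: mk_eq; have := MD (MMr (rep (mk y)) (mkrep x)) (MMl x (mkrep y)); congr M; ring.
Qed.
Lemma mk_surj a : exists x, a = mk x. Proof. by exists (rep a); rewrite repK. Qed.

Lemma qaddA : associative qadd.
Proof. move=> a b c; have [x ->] := mk_surj a; have [y ->] := mk_surj b; have [z ->] := mk_surj c.
by rewrite !qaddE addrA. Qed.
Lemma qaddC : commutative qadd.
Proof. move=> a b; have [x ->] := mk_surj a; have [y ->] := mk_surj b. by rewrite !qaddE addrC. Qed.
Lemma qadd0 : left_id (mk 0) qadd.
Proof. move=> a; have [x ->] := mk_surj a. by rewrite !qaddE add0r. Qed.
Lemma qaddN : left_inverse (mk 0) qopp qadd.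
Proof. move=> a; have [x ->] := mk_surj a. by rewrite qoppE !qaddE addNr. Qed.
HB.instance Definition _ := GRing.isZmodule.Build QT qaddA qaddC qadd0 qaddN.

Lemma qmulA : associative qmul.
Proof. move=> a b c; have [x ->] := mk_surj a; have [y ->] := mk_surj b; have [z ->] := mk_surj c.
by rewrite !qmulE mulrA. Qed.
Lemma qmulC : commutative qmul.
Proof. move=> a b; have [x ->] := mk_surj a; have [y ->] := mk_surj b. by rewrite !qmulE mulrC. Qed.
Lemma qmul1 : left_id (mk 1) qmul.
Proof. move=> a; have [x ->] := mk_surj a. by rewrite !qmulE mul1r. Qed.
Lemma qmulD : left_distributive qmul qadd.
Proof. move=> a b c; have [x ->] := mk_surj a; have [y ->] := mk_surj b; have [z ->] := mk_surj c.
by rewrite !(qmulE, qaddE) mulrDl. Qed.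
Lemma notM1 : ~ M 1. Proof. by case: Mmax. Qed.
Lemma q1n0 : mk 1 != mk 0.
Proof. apply/eqP => /mk_eqP; rewrite subr0; exact: notM1. Qed.
HB.instance Definition _ := GRing.Zmodule_isComNzRing.Build QT qmulA qmulC qmul1 qmulD q1n0.

Lemma inv_ex a : exists b, inM (rep a) || inM (rep a * b - 1).
Proof.
case: (inMP (rep a)) => [_|nMa]; first by exists 0.
pose J := fun x => exists m r, M m /\ x = m + r * rep a.
have Jid : is_ideal J.
  split; first by exists 0, 0; split; [exact: M0 | ring].
    move=> x y [m1 [r1 [M1 ->]]] [m2 [r2 [M2 ->]]]; exists (m1 + m2), (r1 + r2); split; [exact: MD|ring].
  move=> r x [m1 [r1 [M1 ->]]]; exists (r * m1), (r * r1); split; [exact: MMl|ring].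
case: Mmax => _ _ /(_ J Jid) [].
  by move=> x Mx; exists x, 0; split=> //; ring.
  move=> H; case: nMa; apply: H; exists 0, 1; split; [exact: M0|ring].
move=> [m [r [Mm e]]]; exists r; apply/orP; right; apply/inMP.
have -> : rep a * r - 1 = - m by rewrite e; ring.
exact: MN.
Qed.
Definition qinv (a : QT) : QT :=
  if inM (rep a) then mk 0 else mk (proj1_sig (constructive_indefinite_description _ (inv_ex a))).
Lemma qzeroE (a : QT) : (a == 0) = inM (rep a).
Proof.
have -> : (a == 0) = (mk (rep a) == mk 0) by rewrite repK.
apply/eqP/inMP => [/mk_eqP|H]; first by rewrite subr0.
by apply: mk_eq; rewrite subr0.
Qed.
Lemma qmulVf (a : QT) : a != 0 -> qinv a * a = 1.
Proof.
rewrite qzeroE /qinv => nz.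
case: constructive_indefinite_description => b /= /orP[Hm|/inMP H]; first by rewrite Hm in nz.
rewrite (negPf nz).
change (qmul (mk b) a = mk 1); rewrite -[a]repK qmulE; apply: mk_eq.
by have := H; congr M; ring.
Qed.
Lemma qinv0 : qinv 0 = 0.
Proof. by rewrite /qinv ifT // -qzeroE. Qed.
HB.instance Definition _ := GRing.ComNzRing_isField.Build QT qmulVf qinv0.

Definition pi (x : D) : QT := mk x.
Lemma pi_is_zmod : zmod_morphism pi.
Proof. move=> x y; change (mk (x - y) = qadd (mk x) (qopp (mk y))); by rewrite qoppE qaddE. Qed.
Lemma pi_is_monoid : monoid_morphism pi.
Proof. split=> // x y; change (mk (x * y) = qmul (mk x) (mk y)); by rewrite qmulE. Qed.
HB.instance Definition _ := GRing.isZmodMorphism.Build D QT pi pi_is_zmod.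
HB.instance Definition _ := GRing.isMonoidMorphism.Build D QT pi pi_is_monoid.
Lemma pi_surj (a : QT) : exists x, pi x = a. Proof. by exists (rep a); rewrite /pi repK. Qed.
Lemma pi0E x : (pi x == 0) = inM x.
Proof. by apply/eqP/inMP => [/mk_eqP|H]; [rewrite subr0|apply: mk_eq; rewrite subr0]. Qed.

Lemma monic_decomp (p : {poly D}) n : p \is monic -> size p = n.+1 ->
  (size (p - 'X^n)%R <= n)%N.
Proof.
move=> mp sp; apply/leq_sizeP => j lenj; rewrite coefB coefXn.
case: (ltngtP j n) => [|ltnj|ejn]; first by rewrite ltnNge lenj.
  by rewrite nth_default ?subr0 // sp.
by move: mp; rewrite monicE /lead_coef sp ejn => /eqP ->; rewrite subrr.
Qed.

Lemma bezout_d d : ~ M d -> exists mm r, M mm /\ 1 = mm + r * d.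
Proof.
move=> nMd.
pose J := fun x => exists m r, M m /\ x = m + r * d.
have Jid : is_ideal J.
  split; first by exists 0, 0; split; [exact: M0 | ring].
    move=> x y [m1 [r1 [M1 ->]]] [m2 [r2 [M2 ->]]]; exists (m1 + m2), (r1 + r2); split; [exact: MD|ring].
  move=> r x [m1 [r1 [M1 ->]]]; exists (r * m1), (r * r1); split; [exact: MMl|ring].
case: Mmax => _ _ /(_ J Jid) [].
  by move=> x Mx; exists x, 0; split=> //; ring.
  move=> H; case: nMd; apply: H; exists 0, 1; split; [exact: M0|ring].
by move=> [m [r [Mm e]]]; exists m, r.
Qed.

Lemma lift_irr n (h : {poly D}) (d : D) : ~ M d -> (0 < n)%N -> h \is monic -> size h = n.+1 ->
  exists h' t, [/\ h' \is monic, size h' = n.+1, irreducible_in h' & h' = h + d%:P * t].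
Proof.
move=> nMd n_gt0 mh sh.
have [p [mp sp irp]] := exists_irr QT n_gt0.
pose u : {poly D} := 'X^n + \poly_(i < n) rep (p`_i).
have mapu : map_poly pi u = p.
  apply/polyP => i; rewrite coef_map /= coefD coefXn coef_poly.
  case: (ltngtP i n) => [lt|gt|->].
  - by rewrite add0r /pi repK.
  - by rewrite addr0 rmorph0 nth_default // sp.
  - rewrite addr0 rmorph1; move: mp; rewrite monicE /lead_coef sp => /eqP ->.
    by [].
have [mm [r [Mmm e1]]] := bezout_d nMd.
pose v := u - h.
have sv : (size v <= n)%N.
  have -> : v = \poly_(i < n) rep (p`_i) - (h - 'X^n) by rewrite /v /u; ring.
  apply: leq_trans (size_polyD _ _) _; rewrite size_polyN geq_max monic_decomp // andbT.
  exact: size_poly.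
pose t := r%:P * v.
have st : (size (d%:P * t)%R <= n)%N.
  by rewrite /t mulrA -polyCM mul_polyC; apply: leq_trans (size_scale_leq _ _) sv.
pose h' := h + d%:P * t.
have sh' : size h' = n.+1 by rewrite size_polyDl // sh ltnS.
have mh' : h' \is monic.
  by rewrite monicE lead_coefDl ?sh ?ltnS // -monicE.
have prd : pi d * pi r = 1.
  rewrite -rmorphM mulrC.
  have -> : r * d = 1 - mm by rewrite e1; ring.
  have pm : pi mm = 0 by apply/eqP; rewrite pi0E; apply/inMP.
  by rewrite rmorphB rmorph1 /= pm subr0.
have maph' : map_poly pi h' = p.
  rewrite /h' /t /v rmorphD !rmorphM /= !map_polyC /= rmorphB /= mapu mulrA -polyCM prd.
  by rewrite polyC1 mul1r addrC subrK.
exists h', t; split => //.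
split; first exact: monic_neq0.
  by rewrite poly_unitE sh' eqSS; move: n_gt0; case: (n).
move=> A B eAB.
have lAB : lead_coef A * lead_coef B = 1 by rewrite -lead_coefM -eAB (monicP mh').
have uA : lead_coef A \is a GRing.unit by apply/unitrPr; exists (lead_coef B).
have uB : lead_coef B \is a GRing.unit by apply/unitrPr; exists (lead_coef A); rewrite mulrC.
have piA : pi (lead_coef A) != 0.
  apply/eqP => H; have := congr1 pi lAB; rewrite rmorphM /= H mul0r rmorph1 => /eqP.
  by rewrite eq_sym oner_eq0.
have szA : size (map_poly pi A) = size A := size_map_poly_id0 piA.
have mapAB : map_poly pi A * map_poly pi B = p by rewrite -maph' eAB rmorphM.
have dA : map_poly pi A %| p by rewrite -mapAB dvdp_mulIl.
have szAB : size h' = (size A + size B).-1.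
  by rewrite eAB size_proper_mul // lAB oner_neq0.
case: (eqVneq (size A) 1) => [sA1|sAn1].
  by left; rewrite poly_unitE sA1 eqxx /=; move: uA; rewrite /lead_coef sA1.
have sAn1' : size (map_poly pi A) != 1 by rewrite szA.
have := irp.2 (map_poly pi A) sAn1' dA => /eqp_size; rewrite szA sp => sA.
right; rewrite poly_unitE.
have sB1 : size B = 1.
  move: szAB; rewrite sh' sA addSn /=; lia.
by rewrite sB1 eqxx /=; move: uB; rewrite /lead_coef sB1.
Qed.
End Quot.

Lemma horner_toK (D : idomainType) m (C : 'M[D]_m.+1) (g : {poly D}) (c : {fraction D}) :
  horner_mx (map_mx (@toK D) C) (map_poly (@toK D) g * c%:P)
  = map_mx (@toK D) (horner_mx C g) * c%:M.
Proof. by rewrite rmorphM /= horner_mx_C map_horner_mx. Qed.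
Lemma char_poly_castmx (R : comNzRingType) k l (e : k = l) (A : 'M[R]_k) :
  char_poly (castmx (e, e) A) = char_poly A.
Proof. by case: l / e; rewrite castmx_id. Qed.

Definition Cm (D : idomainType) m (h : {poly D}) : 'M[D]_m.+1 :=
  \matrix_(i, j) if i == m :> nat then - h`_j else (i.+1 == j :> nat)%:R.
Lemma char_poly_Cm (D : idomainType) m (h : {poly D}) :
  h \is monic -> size h = m.+2 -> char_poly (Cm m h) = h.
Proof.
move=> mh sh.
have e : (size h).-1 = m.+1 by rewrite sh.
have -> : Cm m h = castmx (e, e) (companionmx h).
  by apply/matrixP => i j; rewrite castmxE !mxE /= sh.
by rewrite char_poly_castmx companionmxK.
Qed.
Lemma Cm_pow (D : idomainType) m (h : {poly D}) i : (i <= m)%N ->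
  forall j : 'I_m.+1, (Cm m h ^+ i) ord0 j = (i == j :> nat)%:R.
Proof.
elim: i => [|i IH] lim j; first by rewrite expr0 mxE.
have lti : (i < m.+1)%N by apply: ltn_trans lim _.
have lim' : (i <= m)%N by apply: ltnW.
rewrite exprSr mxE (bigD1 (Ordinal lti)) //= (IH lim') eqxx mul1r.
rewrite big1 ?addr0; last first.
  move=> k; rewrite -val_eqE /= eq_sym => /negPf nk.
  by rewrite (IH lim') nk mul0r.
by rewrite mxE /= ltn_eqF.
Qed.
Lemma horner_Cm_row (D : idomainType) m (h s : {poly D}) : (size s <= m.+1)%N ->
  forall j : 'I_m.+1, (horner_mx (Cm m h) s) ord0 j = s`_j.
Proof.
move=> ss j.
have es : s = \sum_(i < m.+1) s`_i *: 'X^i.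
  rewrite -poly_def; apply/polyP => k; rewrite coef_poly; case: ltnP => // le.
  by rewrite nth_default // (leq_trans ss le).
have hX i : (i < m.+1)%N -> horner_mx (Cm m h) (s`_i *: 'X^i) ord0 j = s`_i * (i == j :> nat)%:R.
  move=> lt; rewrite horner_mxZ rmorphXn /= horner_mx_X mxE Cm_pow //.
rewrite {1}es linear_sum summxE (bigD1 j) //= hX // eqxx mulr1 big1 ?addr0 //.
move=> i; rewrite -val_eqE /= => /negPf nij.
by rewrite hX // nij mulr0.
Qed.
Lemma lift_gen (D : idomainType) (d : D) n (h : {poly D}) :
  fin_max_ideals_meet_zero D -> d != 0 -> (0 < n)%N -> h \is monic -> size h = n.+1 ->
  exists h' t, [/\ h' \is monic, size h' = n.+1, irreducible_in h' & h' = h + d%:P * t].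
Proof.
move=> fin dn0 n0 mh sh.
have [M [mM [[s Ms] nMd]]] : exists M : D -> Prop, is_maximal_ideal M /\ finite_index M /\ ~ M d.
  apply: NNPP => H; move/eqP: dn0; apply; apply: fin => I mI fI.
  apply: NNPP => nI; apply: H; exists I; split; [|split] => //.
exact: (@lift_irr D M s mM Ms n h d nMd n0 mh sh).
Qed.

Theorem mainTheorem1 (D : idomainType) (m : nat) (g : {poly D}) (d : D) :
  fin_max_ideals_meet_zero D ->
  d != 0 ->
  IntK_Mn m (map_poly (@toK D) g * ((toK d)^-1)%:P) <->
  (forall h : {poly D},
      h \is monic -> size h = m.+2 -> irreducible_in h ->
      exists q r : {poly D}, g = q * h + d%:P * r).
Proof.
move=> fin dn0; split.
  move=> HI h mh sh _.
  have [B HB] := HI (Cm m h).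
  rewrite horner_toK in HB.
  pose s := g %% h; pose qq := g %/ h.
  have eg : g = qq * h + s by have := Pdiv.Idomain.divp_eq g h; rewrite (monicP mh) expr1n scale1r.
  have ss : (size s <= m.+1)%N by rewrite -ltnS -sh Pdiv.Idomain.ltn_modp monic_neq0.
  have CH := Cayley_Hamilton (Cm m h); rewrite char_poly_Cm // in CH.
  have Hs : horner_mx (Cm m h) g = horner_mx (Cm m h) s.
    by rewrite {1}eg rmorphD rmorphM /= CH mulr0 add0r.
  rewrite Hs in HB.
  have cf (j : 'I_m.+1) : s`_j = d * B ord0 j.
    have := congr1 (fun M : 'M[{fraction D}]_m.+1 => M ord0 j) HB; rewrite /= -mulmxE mul_mx_scalar !mxE.
    rewrite horner_Cm_row // => e.
    have dK : toK d != 0 by rewrite /toK tofrac_eq0.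
    apply/eqP; rewrite -tofrac_eq; apply/eqP.
    by rewrite rmorphM /= -[X in _ = _ * X]e mulrA mulfV // mul1r.
  exists qq, (\poly_(j < m.+1) B ord0 (inord j)).
  rewrite {1}eg; congr (_ + _); apply/polyP => k.
  rewrite coefCM coef_poly; case: ltnP => [lt|ge].
    by rewrite -[k]/(nat_of_ord (Ordinal lt)) cf; congr (_ * B _ _); apply: val_inj; rewrite /= inordK.
  by rewrite mulr0 nth_default // (leq_trans ss ge).
move=> Hirr C.
have [h' [t [mh' sh' irh' eh']]] :=
  @lift_gen D d m.+1 (char_poly C) fin dn0 (ltn0Sn m) (char_poly_monic C) (size_char_poly C).
have [q [r eg]] := Hirr h' mh' sh' irh'.
exists (horner_mx C (q * t + r)).
rewrite horner_toK.
have Hg : horner_mx C g = (d%:M) * horner_mx C (q * t + r).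
  rewrite eg eh' !(rmorphD, rmorphM) /= Cayley_Hamilton horner_mx_C add0r.
  rewrite mulrDr; congr (_ + _); rewrite !mulrA; congr (_ * _).
  by rewrite -!mulmxE scalar_mxC.
have dK : toK d != 0 by rewrite /toK tofrac_eq0.
rewrite Hg rmorphM /= map_scalar_mx -mulrA -!mulmxE scalar_mxC mulmxA -scalar_mxM mulfV //.
by rewrite mul1mx.
Qed.
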